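(* Let $(\Omega,\mathcal F,\mu)$ be a measure space, $p\in[1,\infty)$, $f\in L^p(\Omega,\mathcal F,\mu)$, and $1\le m<k$ integers. If there exists $g\in\mathscr G_{p,m}$ with $\|f-g\|_p=\mathscr D_{p,k}(f)$, then $f\in\mathscr G_{p,m}$ (i.e. $f$ coincides $\mu$-a.e. with an element of $\mathscr G_{p,m}$).
   Context: All measures are assumed not identically zero. $\mathscr G_{p,k}$ is the set of functions $\sum_{i=1}^l a_i\mathbf 1_{A_i}\in L^p$ with $l\le k$, $\{A_i\}$ a measurable partition of $\Omega$, $a_i\in\mathbb R$; $\mathscr D_{p,k}(f)=\inf\{\|f-h\|_p:\ h\in\mathscr G_{p,k}\}$. *)

(* Defs.v *)
From HB Require Import structures.
From mathcomp Require Import all_boot all_order all_algebra.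
From mathcomp Require Import all_classical all_reals all_analysis.
Set Implicit Arguments. Unset Strict Implicit. Unset Printing Implicit Defensive.
Import Order.TTheory GRing.Theory Num.Theory.
Local Open Scope classical_set_scope.
Local Open Scope ring_scope.

Definition inLp {d} {T : measurableType d} {R : realType}
  (mu : {measure set T -> \bar R}) (p : R) (f : T -> R) : Prop :=
  measurable_fun [set: T] f /\ (Lnorm mu p%:E (EFin \o f) < +oo)%E.

Definition Gpk {d} {T : measurableType d} {R : realType}
  (mu : {measure set T -> \bar R}) (p : R) (k : nat) (h : T -> R) : Prop :=
  inLp mu p h /\
  exists (l : nat) (A : 'I_l -> set T) (a : 'I_l -> R),
    [/\ (l <= k)%N,
        (forall i, measurable (A i)),
        (forall i j, i != j -> A i `&` A j = set0),
        (\bigcup_(i in [set: 'I_l]) A i = [set: T]) &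
        (h = fun x => \sum_(i < l) a i * \1_(A i) x)].

Definition Dpk {d} {T : measurableType d} {R : realType}
  (mu : {measure set T -> \bar R}) (p : R) (k : nat) (f : T -> R) : \bar R :=
  ereal_inf [set Lnorm mu p%:E (EFin \o (f \- h)) | h in Gpk mu p k].

(* Main.v *)
Require Import Defs.
From HB Require Import structures.
From mathcomp Require Import all_boot all_order all_algebra.
From mathcomp Require Import all_classical all_reals all_analysis.
From mathcomp Require Import measurable_realfun lra.
Import Order.TTheory GRing.Theory Num.Theory.
Local Open Scope classical_set_scope.
Local Open Scope ring_scope.

Lemma powR_frac_le (R : realType) (p S x : R) : 1 <= p -> 0 < S -> 0 <= x -> x <= S ->
  x `^ p <= S `^ p * (x / S).
Proof.
move=> p1 S0 x0 xS.
have p0 : p != 0 by apply: lt0r_neq0; apply: lt_le_trans p1.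
have [->|xn0] := eqVneq x 0; first by rewrite powR0 // mul0r mulr0.
rewrite {1}(_ : x = S * (x / S)); last by rewrite mulrC divfK // gt_eqF.
rewrite powRM ?(ltW S0) ?divr_ge0 ?(ltW S0) //.
rewrite ler_wpM2l ?powR_ge0 //.
apply: ge1r_powR => //; apply/andP; split.
  by rewrite divr_gt0 // lt0r xn0.
by rewrite ler_pdivrMr // mul1r.
Qed.

Lemma powR_superadd (R : realType) (p u e : R) : 1 <= p -> 0 <= u -> 0 <= e ->
  u `^ p + e `^ p <= (u + e) `^ p.
Proof.
move=> p1 u0 e0.
have p0 : p != 0 by apply: lt0r_neq0; apply: lt_le_trans p1.
have [S0|S0] := eqVneq (u + e) 0.
  have u00 : u = 0 by apply/eqP; rewrite eq_le u0 andbT -S0 lerDl.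
  have e00 : e = 0 by move: S0; rewrite u00 add0r.
  by rewrite u00 e00 addr0 powR0.
have Sp : 0 < u + e by rewrite lt0r S0 addr_ge0.
have h1 := @powR_frac_le _ p _ _ p1 Sp u0 (_ : u <= u + e).
have h2 := @powR_frac_le _ p _ _ p1 Sp e0 (_ : e <= u + e).
apply: (le_trans (lerD (h1 _) (h2 _))).
- by rewrite lerDl.
- by rewrite lerDr.
by rewrite -mulrDr -mulrDl divff ?mulr1.
Qed.

Lemma sum_part_eval (R : realType) (T : Type) (l : nat) (A : 'I_l -> set T)
  (a : 'I_l -> R) :
  (forall i j, i != j -> A i `&` A j = set0) ->
  forall j x, A j x -> \sum_(i < l) a i * \1_(A i) x = a j.
Proof.
move=> dis j x Ajx.
rewrite (bigD1 j) //= indicE mem_set // mulr1 big1 ?addr0 // => i ij.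
rewrite indicE memNset ?mulr0 // => Aix.
have := dis i j ij; rewrite -subset0 => /(_ x); apply; by split.
Qed.

Section Ln.
Context d (T : measurableType d) (R : realType) (mu : {measure set T -> \bar R}).

Lemma LnormE (p : R) (u : T -> R) :
  Lnorm mu p%:E (EFin \o u) = ((\int[mu]_x (`|u x| `^ p)%:E) `^ p^-1)%E.
Proof.
by rewrite unlock.
Qed.

Lemma mTpowR (p : R) (f : T -> R) :
  measurable_fun [set: T] f -> measurable_fun setT (fun x => f x `^ p)%R.
Proof. exact: (@measurableT_comp _ _ _ _ _ _ (@powR R ^~ p)). Qed.

Lemma mpow (p : R) (u : T -> R) : measurable_fun [set: T] u ->
  measurable_fun [set: T] (fun x => ((`|u x| `^ p)%:E : \bar R)).
Proof. by move=> mu_; apply/measurable_EFinP/mTpowR/measurableT_comp. Qed.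

Lemma Lnorm_le_pt (p : R) (u v : T -> R) : 0 <= p ->
  measurable_fun setT u -> measurable_fun setT v ->
  (forall x, `|u x| <= `|v x|) ->
  (Lnorm mu p%:E (EFin \o u) <= Lnorm mu p%:E (EFin \o v))%E.
Proof.
move=> p0 mu_ mv uv; rewrite !LnormE.
apply: gt0_ler_poweR; first by rewrite invr_ge0.
- by rewrite in_itv /= leey integral_ge0 // => x _; rewrite lee_fin powR_ge0.
- by rewrite in_itv /= leey integral_ge0 // => x _; rewrite lee_fin powR_ge0.
apply: ge0_le_integral => //.
all: try by move=> x _; rewrite lee_fin powR_ge0.
all: try exact: mpow.
by move=> x _; rewrite lee_fin ge0_ler_powR.
Qed.

Lemma Lnorm_pow (p : R) (u : T -> R) : p != 0 ->
  ((Lnorm mu p%:E (EFin \o u)) `^ p = \int[mu]_x (`|u x| `^ p)%:E)%E.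
Proof.
move=> p0; by rewrite powR_Lnorm.
Qed.

Lemma Lnorm_lt (p e : R) (u v : T -> R) (B : set T) : 1 <= p ->
  measurable B -> (0 < mu B)%E -> 0 < e ->
  measurable_fun setT u -> measurable_fun setT v ->
  (Lnorm mu p%:E (EFin \o v) < +oo)%E ->
  (forall x, B x -> `|u x| + e <= `|v x|) ->
  (forall x, `|u x| <= `|v x|) ->
  (Lnorm mu p%:E (EFin \o u) < Lnorm mu p%:E (EFin \o v))%E.
Proof.
move=> p1 mB muB e0 mu_ mv vfin huv huv'.
have p0 : 0 < p by apply: lt_le_trans p1.
have Ivfin : (\int[mu]_x (`|v x| `^ p)%:E < +oo)%E.
  by rewrite -Lnorm_pow ?gt_eqF // poweR_lty.
have Iu0 : (0 <= \int[mu]_x (`|u x| `^ p)%:E)%E.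
  by apply: integral_ge0 => x _; rewrite lee_fin powR_ge0.
have key : (\int[mu]_x (`|u x| `^ p)%:E + (e `^ p)%:E * mu B <=
            \int[mu]_x (`|v x| `^ p)%:E)%E.
  have -> : ((e `^ p)%:E * mu B = \int[mu]_x ((e `^ p) * \1_B x)%:E)%E.
    under eq_integral do rewrite EFinM.
    rewrite ge0_integralZl //.
    - by rewrite integral_indic // setIT.
    - by apply/measurable_EFinP; exact: measurable_indic.
    - by rewrite lee_fin powR_ge0.
  rewrite -ge0_integralD //; first last.
  - by apply/measurable_EFinP/measurable_funM => //; exact: measurable_indic.
  - by move=> x _; rewrite lee_fin mulr_ge0 ?powR_ge0 // indicE.
  - exact: mpow.
  under eq_integral do rewrite -EFinD.
  apply: ge0_le_integral => //.
  - by move=> x _; rewrite lee_fin addr_ge0 ?mulr_ge0 ?powR_ge0 // indicE.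
  - apply/measurable_EFinP; apply: measurable_funD.
      by apply: mTpowR; exact: measurableT_comp.
    by apply: measurable_funM => //; exact: measurable_indic.
  - exact: mpow.
  move=> x _; rewrite lee_fin indicE.
  have [Bx|nBx] := boolP (x \in B).
    rewrite mulr1; apply: (le_trans (@powR_superadd _ p _ _ p1 (normr_ge0 _) (ltW e0))).
    apply: ge0_ler_powR; first exact: ltW.
    - by rewrite nnegrE addr_ge0 // ltW.
    - by rewrite nnegrE.
    by apply: huv; rewrite -inE.
  rewrite mulr0 addr0; apply: ge0_ler_powR => //; exact: ltW.
rewrite ltNge; apply/negP => le_vu.
have : (\int[mu]_x (`|v x| `^ p)%:E <= \int[mu]_x (`|u x| `^ p)%:E)%E.
  rewrite -!Lnorm_pow ?gt_eqF //; apply: gt0_ler_poweR => //; first exact: ltW.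
  - by rewrite in_itv /= leey Lnorm_ge0.
  - by rewrite in_itv /= leey Lnorm_ge0.
move=> /(le_trans key).
have Iufin : (\int[mu]_x (`|u x| `^ p)%:E)%E \is a fin_num.
  rewrite ge0_fin_numE //; apply: le_lt_trans Ivfin.
  apply: le_trans key; rewrite leeDl //.
  by rewrite mule_ge0 // lee_fin powR_ge0.
rewrite leNgt => /negP; apply; rewrite lteDl //.
by rewrite mule_gt0 // lte_fin powR_gt0.
Qed.

End Ln.

Lemma shift_norm (R : realType) (s : bool) (t e : R) : 0 < e ->
  e <= (if s then 1 else -1) * t ->
  `|t - (if s then 1 else -1) * e| + e <= `|t|.
Proof.
case: s; rewrite ?mul1r ?mulN1r => e0 h.
  by rewrite !ger0_norm; lra.
by rewrite !ler0_norm; lra.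
Qed.

Lemma negl_fin d (T : measurableType d) (R : realType)
  (mu : {measure set T -> \bar R}) (l : nat) (F : 'I_l -> set T) :
  (forall i, mu.-negligible (F i)) -> mu.-negligible (\bigcup_(i in [set: 'I_l]) F i).
Proof.
move=> hF.
pose G (k : nat) := if insub k is Some i then F i else set0.
apply: (negligibleS (A := \bigcup_k G k)); last first.
  apply: negligible_bigcup => k; rewrite /G; case: insub => [i|] //.
  exact: negligible_set0.
move=> x [i _ Fix]; exists (val i) => //; by rewrite /G valK.
Qed.

Theorem proposition2p16 (d : measure_display) (T : measurableType d)
  (R : realType) (mu : {measure set T -> \bar R})
  (mu_nz : mu [set: T] != 0%E)
  (p : R) (p1 : 1 <= p) (f : T -> R) (hf : inLp mu p f)
  (m k : nat) (m1 : (1 <= m)%N) (mk : (m < k)%N) :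
  (exists g, Gpk mu p m g /\ Lnorm mu p%:E (EFin \o (f \- g)) = Dpk mu p k f) ->
  exists h, Gpk mu p m h /\ {ae mu, forall x, f x = h x}.
Proof.
move=> [g [[[mg gfin] [l [A [a [ll mA dis cov gE]]]]] Hg]].
exists g; split; first by split; [split|exists l, A, a].
have p0 : 0 < p by apply: lt_le_trans p1.
have [mf ffin] := hf.
have gval : forall j x, A j x -> g x = a j.
  by move=> j x Ajx; rewrite gE; exact: sum_part_eval.
have covx : forall x, exists j, A j x.
  move=> x; have : [set: T] x by [].
  by rewrite -cov => -[j _ Ajx]; exists j.
pose sg (s : bool) : R := if s then 1 else -1.
pose eps (n : nat) : R := n.+1%:R^-1.
have eps0 : forall n, 0 < eps n by move=> n; rewrite /eps invr_gt0.
pose B i n s := A i `&` [set x | eps n <= sg s * (f x - a i)].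
have mB : forall i n s, measurable (B i n s).
  move=> i n s; apply: measurableI => //.
  rewrite -(setTI [set x | _]) -preimage_itvcy.
  apply: (_ : measurable_fun setT (fun x => sg s * (f x - a i))) => //.
  by apply: measurable_funM => //; apply: measurable_funB.
have [allneg|] := pselect (forall i n s, mu.-negligible (B i n s)).
  apply: (negligibleS (A := \bigcup_n \bigcup_(i in [set: 'I_l])
      (B i n true `|` B i n false))).
    move=> x /= fgx.
    have [j Ajx] := covx x.
    set t := f x - a j.
    have t0 : t != 0 by rewrite subr_eq0 -(gval j x Ajx); apply/eqP.
    have at0 : 0 < `|t| by rewrite normr_gt0.
    exists (Num.Def.trunc (`|t|^-1)) => //; exists j => //.
    have le_eps : eps (Num.Def.trunc (`|t|^-1)) <= `|t|.
      rewrite /eps -[leRHS]invrK lef_pV2 ?posrE ?invr_gt0 //.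
      exact/ltW/truncnS_gt.
    have [tpos|tneg] := leP 0 t.
      apply: or_introl; split => //=; rewrite /sg mul1r.
      by move: le_eps; rewrite ger0_norm.
    apply: or_intror; split => //=; rewrite /sg mulN1r.
    by move: le_eps; rewrite ltr0_norm.
  apply: negligible_bigcup => n; apply: negl_fin => i.
  by apply: negligibleU; apply: allneg.
move=> /existsNP [i /existsNP [n /existsNP [s nB]]].
exfalso.
set Bs := B i n s.
have muB : (0 < mu Bs)%E.
  rewrite lt0e measure_ge0 andbT; apply/eqP => B0; apply: nB.
  exact/negligibleP.
have BA : Bs `<=` A i by move=> x [].
pose c := sg s * eps n.
pose A' (j : 'I_l.+1) : set T :=
  if unlift ord_max j is Some j' then (if j' == i then A i `\` Bs else A j')
  else Bs.
pose a' (j : 'I_l.+1) : R :=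
  if unlift ord_max j is Some j' then a j' else a i + c.
pose h := fun x => \sum_(j < l.+1) a' j * \1_(A' j) x.
have A'lift : forall j', A' (lift ord_max j') `<=` A j'.
  move=> j' x; rewrite /A' liftK; case: eqP => [->|] //; by case.
have A'liftB : forall j', A' (lift ord_max j') `&` Bs = set0.
  move=> j'; apply/seteqP; split => // x [] /[swap] Bx.
  rewrite /A' liftK; case: eqP => [_ [] //|/eqP ji Ax].
  have := dis j' i ji; rewrite -subset0; apply; split => //; exact: BA.
have A'max : A' ord_max = Bs by rewrite /A' unlift_none.
have dis' : forall j1 j2, j1 != j2 -> A' j1 `&` A' j2 = set0.
  move=> j1 j2; case: (unliftP ord_max j1) => [j1' ->|->];
    case: (unliftP ord_max j2) => [j2' ->|->] //.
  - move=> jj; apply/seteqP; split => // x [/A'lift h1 /A'lift h2].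
    have jj' : j1' != j2' by apply: contraNneq jj => ->.
    by have := dis j1' j2' jj'; rewrite -subset0; apply; split.
  - by rewrite A'max A'liftB.
  - by rewrite A'max setIC A'liftB.
  - by rewrite eqxx.
have hval : forall j x, A' j x -> h x = a' j.
  by move=> j x Ax; exact: sum_part_eval.
have hE : forall x, h x = g x + c * \1_Bs x.
  move=> x; have [Bx|nBx] := pselect (Bs x).
    rewrite (hval ord_max); last by rewrite A'max.
    rewrite /a' unlift_none indicE mem_set // mulr1 (gval i) //; exact: BA.
  have [j Ajx] := covx x.
  rewrite (hval (lift ord_max j)).
    by rewrite /a' liftK (gval j) // indicE memNset // mulr0 addr0.
  rewrite /A' liftK; case: eqP => [ji|_] //; split => //; by rewrite -ji.
have mh : measurable_fun setT h.
  rewrite (_ : h = fun x => g x + c * \1_Bs x); last by apply/funext => x; exact: hE.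
  apply: measurable_funD => //; apply: measurable_funM => //; exact: measurable_indic (mB i n s).
have mfg : measurable_fun setT (f \- g) by exact: measurable_funB.
have mfh : measurable_fun setT (f \- h) by exact: measurable_funB.
have ptw : forall x, `|(f \- h) x| <= `|(f \- g) x|.
  move=> x; rewrite /= hE indicE; have [Bx|nBx] := boolP (x \in Bs).
    move: Bx; rewrite inE => -[Ax Bx].
    rewrite mulr1 (gval i x Ax) opprD addrA.
    have := @shift_norm _ s _ _ (eps0 n) Bx; rewrite -/(sg s) => hh.
    by apply: le_trans hh; rewrite lerDl ltW.
  by rewrite mulr0 addr0.
have ptwB : forall x, Bs x -> `|(f \- h) x| + eps n <= `|(f \- g) x|.
  move=> x Bx; rewrite /= hE indicE mem_set // mulr1.
  have [Ax Bx'] := Bx.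
  rewrite (gval i x Ax) opprD addrA.
  exact: @shift_norm _ s _ _ (eps0 n) Bx'.
have fgfin : (Lnorm mu p%:E (EFin \o (f \- g)%R) < +oo)%E.
  have mng : measurable_fun setT (-%R \o g) by exact: measurableT_comp.
  have := minkowski_EFin mu mf mng p1.
  move=> /le_lt_trans; apply.
  apply: lte_add_pinfty => //.
  rewrite (_ : EFin \o (-%R \o g) = \- (EFin \o g))%E // oppe_Lnorm //.
have fhfin : (Lnorm mu p%:E (EFin \o (f \- h)%R) < +oo)%E.
  apply: le_lt_trans fgfin; apply: Lnorm_le_pt => //; exact: ltW.
have hfin : (Lnorm mu p%:E (EFin \o h) < +oo)%E.
  have mnh : measurable_fun setT (-%R \o (f \- h)) by exact: measurableT_comp.
  have := minkowski_EFin mu mf mnh p1.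
  rewrite (_ : (f \+ (-%R \o (f \- h)))%R = h); last first.
    by apply/funext => x /=; rewrite opprB addrC subrK.
  move=> /le_lt_trans; apply.
  apply: lte_add_pinfty => //.
  rewrite (_ : EFin \o (-%R \o (f \- h)%R) = \- (EFin \o (f \- h)%R))%E // oppe_Lnorm //.
have Gh : Gpk mu p k h.
  split; first by split.
  exists l.+1, A', a'; split => //.
  - by apply: leq_ltn_trans mk.
  - move=> j; rewrite /A'; case: unlift => [j'|]; last exact: mB.
    by case: eqP => _ //; apply: measurableD => //; exact: mB.
  - apply/seteqP; split => // x _.
    have [j Ajx] := covx x.
    have [Bx|nBx] := pselect (Bs x).
      by exists ord_max => //; rewrite A'max.
    exists (lift ord_max j) => //.
    rewrite /A' liftK; case: eqP => [ji|_] //; split => //; by rewrite -ji.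
have lt := @Lnorm_lt _ _ _ mu _ _ _ _ _ p1 (mB i n s) muB (eps0 n) mfh mfg fgfin ptwB ptw.
have : (Dpk mu p k f <= Lnorm mu p%:E (EFin \o (f \- h)%R))%E.
  by apply: ereal_inf_lbound; exists h.
rewrite -Hg => /le_lt_trans /(_ lt); by rewrite ltxx.
Qed.
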